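(* Let $\mathbf{H}\in\mathcal{S}^{12}$, $\mathbf{H}\succ0$, and let $(\bar{\mathbf{R}},\bar{\mathbf{t}})\in\mathrm{SO}(3)\times\mathbb{R}^3$. Let $\mathbf{P}_r=[\mathbf{I}_9\ \mathbf{0}_{9\times3}]$ and $\mathbf{H}_r=(\mathbf{P}_r\mathbf{H}^{-1}\mathbf{P}_r^\mathsf{T})^{-1}$. Let $\mathbf{P}_\theta\in\mathbb{R}^{3\times9}$ be the matrix such that for every $\mathbf{M}\in\mathbb{R}^{3\times3}$, $\mathbf{P}_\theta\mathrm{vec}(\mathbf{M})=[M_{32}-M_{23},\ M_{13}-M_{31},\ M_{21}-M_{12}]^\mathsf{T}$, and define $$\mathbf{H}_\theta=4\left(\mathbf{P}_\theta\left[(\bar{\mathbf{R}}^\mathsf{T}\otimes\mathbf{I}_3)^\mathsf{T}\mathbf{H}_r(\bar{\mathbf{R}}^\mathsf{T}\otimes\mathbf{I}_3)\right]^{-1}\mathbf{P}_\theta^\mathsf{T}\right)^{-1}.$$ Suppose $(\mathbf{R},\mathbf{t})\in\mathrm{SO}(3)\times\mathbb{R}^3$ satisfies $$\begin{bmatrix}\mathrm{vec}(\mathbf{R}-\bar{\mathbf{R}})\\ \mathbf{t}-\bar{\mathbf{t}}\end{bmatrix}^\mathsf{T}\mathbf{H}\begin{bmatrix}\mathrm{vec}(\mathbf{R}-\bar{\mathbf{R}})\\ \mathbf{t}-\bar{\mathbf{t}}\end{bmatrix}\le1,$$ and write $\mathbf{R}=\mathbf{R}_{\boldsymbol{\omega}}(\theta)\bar{\mathbf{R}}$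 with axis $\boldsymbol{\omega}\in\mathbb{S}^2$ and angle $\theta$. If $\theta\le90^\circ$, then $$(\boldsymbol{\omega}\sin\theta)^\mathsf{T}\mathbf{H}_\theta(\boldsymbol{\omega}\sin\theta)\le1.$$ Moreover, for $\boldsymbol{\xi}=\boldsymbol{\omega}\sin\theta$ one has $\boldsymbol{\omega}=\boldsymbol{\xi}/\|\boldsymbol{\xi}\|_2$ and $\sin\theta=\|\boldsymbol{\xi}\|_2$.
   Context: $\mathrm{vec}$ stacks columns; $\otimes$ is the Kronecker product; $\mathbb{S}^2$ is the unit sphere in $\mathbb{R}^3$. $\mathbf{R}_{\boldsymbol{\omega}}(\theta)$ is the rotation by angle $\theta$ about axis $\boldsymbol{\omega}$ given by Rodrigues' formula $\mathbf{R}_{\boldsymbol{\omega}}(\theta)=\mathbf{I}_3+\hat{\boldsymbol{\omega}}\sin\theta+\hat{\boldsymbol{\omega}}^2(1-\cos\theta)$, where $\hat{\boldsymbol{\omega}}$ is the skew-symmetric cross-product matrix with rows $(0,-\omega_3,\omega_2)$, $(\omega_3,0,-\omega_1)$, $(-\omega_2,\omega_1,0)$. *)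

(* Defs.v *)
From mathcomp Require Import all_boot all_order all_algebra.
From mathcomp Require Import all_classical all_reals all_analysis.
From mathcomp Require Export mxtens.
Set Implicit Arguments. Unset Strict Implicit. Unset Printing Implicit Defensive.
Import Order.TTheory GRing.Theory Num.Theory.
Local Open Scope ring_scope.

Section Defs.
Variable R : realType.

(* vec: column stacking.  Entry of index j*m + i is M i j
   (same index convention as the Kronecker product  A *t B  of mxtens). *)
Definition vec {m n : nat} (M : 'M[R]_(m, n)) : 'cV[R]_(n * m) :=
  \col_k M (mxtens_unindex k).2 (mxtens_unindex k).1.

Definition qform {n : nat} (A : 'M[R]_n) (x : 'cV[R]_n) : R := (x^T *m A *m x) 0 0.

Definition norm2 {n : nat} (x : 'cV[R]_n) : R := Num.sqrt (\sum_i x i 0 ^+ 2).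

Definition posdef {n : nat} (A : 'M[R]_n) : Prop :=
  A^T = A /\ forall x : 'cV[R]_n, x != 0 -> 0 < qform A x.

Definition is_SO3 (M : 'M[R]_3) : Prop := M^T *m M = 1%:M /\ \det M = 1.

Definition i0 : 'I_3 := inord 0.
Definition i1 : 'I_3 := inord 1.
Definition i2 : 'I_3 := inord 2.

Definition skew (w : 'cV[R]_3) : 'M[R]_3 :=
  \matrix_(i, j)
   (if (i == i0) && (j == i1) then - w i2 0 else
    if (i == i0) && (j == i2) then w i1 0 else
    if (i == i1) && (j == i0) then w i2 0 else
    if (i == i1) && (j == i2) then - w i0 0 else
    if (i == i2) && (j == i0) then - w i1 0 else
    if (i == i2) && (j == i1) then w i0 0 else 0).

Definition rodrigues (w : 'cV[R]_3) (th : R) : 'M[R]_3 :=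
  1%:M + sin th *: skew w + (1 - cos th) *: (skew w *m skew w).

Definition vex (M : 'M[R]_3) : 'cV[R]_3 :=
  \col_k (if k == i0 then M i2 i1 - M i1 i2 else
          if k == i1 then M i0 i2 - M i2 i0 else M i1 i0 - M i0 i1).

Definition unvec3 (v : 'cV[R]_(3 * 3)) : 'M[R]_3 :=
  \matrix_(i, j) v (mxtens_index (j, i)) 0.

(* P_theta : column l is vex of the matrix whose vec is the l-th unit vector,
   so that P_theta *m vec M = vex M for all M. *)
Definition Ptheta : 'M[R]_(3, 3 * 3) :=
  \matrix_(k, l) vex (unvec3 (delta_mx l 0)) k 0.

Definition Pr : 'M[R]_(3 * 3, 3 * 3 + 3) := row_mx 1%:M 0.

Definition Hr (H : 'M[R]_(3 * 3 + 3)) : 'M[R]_(3 * 3) :=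
  invmx (Pr *m invmx H *m Pr^T).

Definition Htheta (H : 'M[R]_(3 * 3 + 3)) (Rb : 'M[R]_3) : 'M[R]_3 :=
  let K := Rb^T *t (1%:M : 'M[R]_3) in
  4 *: invmx (Ptheta *m invmx (K^T *m Hr H *m K) *m Ptheta^T).

End Defs.

(* Main.v *)
Require Import Defs.
From mathcomp Require Import all_boot all_order all_algebra.
From mathcomp Require Import all_classical all_reals all_analysis.
From mathcomp Require Import mxtens ring lra.
Import Order.TTheory GRing.Theory Num.Theory.
Local Open Scope ring_scope.
Set Implicit Arguments. Unset Strict Implicit.

Section Lin.
Variable R : realType.

Lemma qform0 n (A : 'M[R]_n) : qform A 0 = 0.
Proof. by rewrite /qform mulmx0 mxE. Qed.

Lemma psd n (A : 'M[R]_n) : posdef A -> forall x, 0 <= qform A x.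
Proof.
case=> _ hA x; have [->|nz] := eqVneq x 0; first by rewrite qform0.
exact/ltW/hA.
Qed.

Lemma mx_neq0 m n (A : 'M[R]_(m,n)) : A != 0 -> exists i j, A i j != 0.
Proof.
move=> nz; case: (pselect (exists i j, A i j != 0)) => // H; exfalso.
move/eqP: nz; apply; apply/matrixP => i j; rewrite mxE; apply/eqP.
by apply/negPn/negP => hn; apply H; exists i, j.
Qed.

Lemma posdef_unit n (A : 'M[R]_n) : (forall x, x != 0 -> 0 < qform A x) -> A \in unitmx.
Proof.
move=> hA; rewrite -row_free_unit -kermx_eq0.
apply/negP => /negP /mx_neq0 [i [j Hij]].
have nz : (row i (kermx A))^T != 0.
  move: Hij; move: (kermx A) => K Hij.
  apply/eqP => /matrixP /(_ j 0); rewrite !mxE => h; by rewrite h eqxx in Hij.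
have := hA _ nz; rewrite /qform trmxK -row_mul mulmx_ker.
by rewrite row0 mul0mx mxE ltxx.
Qed.

Lemma qform_congr m n (A : 'M[R]_n) (P : 'M[R]_(m,n)) v :
  qform (P *m A *m P^T) v = qform A (P^T *m v).
Proof. by rewrite /qform trmx_mul trmxK !mulmxA. Qed.

Lemma posdef_inv n (A : 'M[R]_n) : posdef A -> posdef (invmx A).
Proof.
move=> pA; have uA : A \in unitmx by apply: posdef_unit; case: pA.
case: pA => sA hA.
split; first by rewrite trmx_inv sA.
move=> x nz; set y := invmx A *m x.
have xe : x = A *m y by rewrite /y mulmxA mulmxV // mul1mx.
have ny : y != 0 by apply: contraNneq nz => y0; rewrite xe y0 mulmx0.
rewrite xe; have -> : A *m y = A^T *m y by rewrite sA.
by rewrite -qform_congr mulmxV // mul1mx sA; exact: hA.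
Qed.

Lemma posdef_cong m n (A : 'M[R]_n) (P : 'M[R]_(m,n)) :
  posdef A -> (forall v : 'cV[R]_m, v != 0 -> P^T *m v != 0) -> posdef (P *m A *m P^T).
Proof.
case=> sA hA hP; split.
  by rewrite !trmx_mul trmxK sA mulmxA.
by move=> v nz; rewrite qform_congr; apply: hA; apply: hP.
Qed.


Lemma schur m n (G : 'M[R]_n) (P : 'M[R]_(m,n)) z : posdef G ->
  (forall v : 'cV[R]_m, v != 0 -> P^T *m v != 0) ->
  qform (invmx (P *m invmx G *m P^T)) (P *m z) <= qform G z.
Proof.
move=> pG hP.
have uG : G \in unitmx by apply: posdef_unit; case: pG.
have pA := posdef_inv pG.
have pM := posdef_cong pA hP.
have uM : (P *m invmx G *m P^T) \in unitmx by apply: posdef_unit; case: pM.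
have pMi := posdef_inv pM.
have sG := proj1 pG. have sA := proj1 pA. have sMi := proj1 pMi.
move: uM sMi pMi; set A := invmx G; set M := P *m A *m P^T; set Mi := invmx M.
move=> uM sMi pMi.
set u := A *m P^T *m Mi *m P *m z.
have Gu : G *m u = P^T *m Mi *m P *m z by rewrite /u !mulmxA mulmxV // mul1mx.
have Pu : P *m u = P *m z by rewrite /u !mulmxA -/M mulmxV // mul1mx.
have e1 : z^T *m G *m u = (P *m z)^T *m Mi *m (P *m z).
  by rewrite -mulmxA Gu trmx_mul !mulmxA.
have e2 : u^T *m G *m z = (P *m z)^T *m Mi *m (P *m z).
  have -> : u^T *m G = (G *m u)^T by rewrite [RHS]trmx_mul sG.
  by rewrite Gu !trmx_mul trmxK sMi !mulmxA.
have e3 : u^T *m G *m u = (P *m z)^T *m Mi *m (P *m z).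
  rewrite -mulmxA Gu !mulmxA.
  have -> : u^T *m P^T = (P *m u)^T by rewrite [RHS]trmx_mul.
  by rewrite Pu.
have E : (z - u)^T *m G *m (z - u) = z^T *m G *m z - (P *m z)^T *m Mi *m (P *m z).
  have -> : (z - u)^T = z^T - u^T by apply/matrixP => i j; rewrite !mxE.
  rewrite !mulmxBl !mulmxBr e1 e2 e3.
  by rewrite subrr subr0.
have h := psd pG (z - u).
move: h; rewrite /qform E.
move: (z^T *m G *m z) ((P *m z)^T *m Mi *m (P *m z)) => X Y.
by rewrite !mxE subr_ge0.
Qed.


Lemma vec_mulr m n (X : 'M[R]_(m,n)) (B : 'M[R]_n) :
  (B^T *t (1%:M : 'M[R]_m)) *m vec X = vec (X *m B).
Proof.
apply/matrixP => k c; rewrite [c]ord1; case: (mxtens_indexP k) => j i.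
rewrite [RHS]mxE mxtens_indexK /= mxE mxE.
rewrite (reindex (@mxtens_index n m)) /=; last first.
  by exists (@mxtens_unindex n m) => x _; rewrite (mxtens_indexK, mxtens_unindexK).
transitivity (\sum_(l < n) \sum_(i' < m) (B^T j l * (1%:M : 'M[R]_m) i i') * X i' l).
  rewrite pair_big /=; apply: eq_bigr => [[l i'] _] /=.
  by rewrite tensmxE !mxE mxtens_indexK.
apply: eq_bigr => l _; rewrite (bigD1 i) //= big1 => [|i' ne].
  by rewrite !mxE eqxx mulr1 addr0 mulrC.
by rewrite !mxE eq_sym (negbTE ne) mulr0 mul0r.
Qed.

Lemma vecK (M : 'M[R]_3) : unvec3 (vec M) = M.
Proof. by apply/matrixP => i j; rewrite !mxE mxtens_indexK. Qed.

Definition pa (k : 'I_3) : 'I_3 * 'I_3 :=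
  if k == i0 then (i1, i2) else if k == i1 then (i2, i0) else (i0, i1).

Lemma vexU (v : 'cV[R]_(3*3)) k :
  vex (unvec3 v) k 0 = v (mxtens_index (pa k)) 0 - v (mxtens_index ((pa k).2, (pa k).1)) 0.
Proof. by rewrite /pa !mxE; case: (k == i0) => //; case: (k == i1). Qed.

Lemma sum_delta N (p : 'I_N) (v : 'cV[R]_N) :
  \sum_l (delta_mx l 0 : 'cV[R]_N) p 0 * v l 0 = v p 0.
Proof.
rewrite (bigD1 p) //= big1 => [|l ne]; first by rewrite mxE !eqxx mul1r addr0.
by rewrite mxE eq_sym (negbTE ne) mul0r.
Qed.

Lemma Ptheta_mul (v : 'cV[R]_(3*3)) : Ptheta R *m v = vex (unvec3 v).
Proof.
apply/matrixP => k c; rewrite [c]ord1 mxE.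
under eq_bigr do rewrite mxE vexU mulrBl.
by rewrite sumrB !sum_delta vexU.
Qed.


Lemma ord3 (k : 'I_3) : k = i0 \/ k = i1 \/ k = i2.
Proof.
case: k => [[|[|[|n]]] Hn] //; [left|right;left|right;right]; apply: val_inj;
  by rewrite /= inordK.
Qed.

Lemma n01 : (i0 == i1) = false. Proof. by rewrite /i0 /i1 -val_eqE /= !inordK. Qed.
Lemma n02 : (i0 == i2) = false. Proof. by rewrite /i0 /i2 -val_eqE /= !inordK. Qed.
Lemma n10 : (i1 == i0) = false. Proof. by rewrite /i0 /i1 -val_eqE /= !inordK. Qed.
Lemma n12 : (i1 == i2) = false. Proof. by rewrite /i2 /i1 -val_eqE /= !inordK. Qed.
Lemma n20 : (i2 == i0) = false. Proof. by rewrite /i0 /i2 -val_eqE /= !inordK. Qed.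
Lemma n21 : (i2 == i1) = false. Proof. by rewrite /i2 /i1 -val_eqE /= !inordK. Qed.
Definition neqs := (n01, n02, n10, n12, n20, n21).

Lemma skew_tr (w : 'cV[R]_3) : (Defs.skew w)^T = - Defs.skew w.
Proof.
apply/matrixP => i j; rewrite !mxE.
have [->|[->|->]] := ord3 i; have [->|[->|->]] := ord3 j;
  by rewrite ?eqxx ?neqs /= ?opprK ?oppr0.
Qed.

Lemma vex_sym (A : 'M[R]_3) : A^T = A -> vex A = 0.
Proof.
move/matrixP => sA.
have e : forall i j, A j i = A i j by move=> i j; move: (sA i j); rewrite mxE.
apply/matrixP => k c; rewrite !mxE.
by case: ifP => _; [|case: ifP => _]; rewrite ?(e i1 i2) ?(e i2 i0) ?(e i0 i1) subrr.
Qed.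

Lemma vex_lin a (A B : 'M[R]_3) : vex (a *: A + B) = a *: vex A + vex B.
Proof.
apply/matrixP => k c; rewrite !mxE.
by case: (k == i0); case: (k == i1); ring.
Qed.

Lemma vex_skew (w : 'cV[R]_3) : vex (Defs.skew w) = 2 *: w.
Proof.
apply/matrixP => k c; rewrite [c]ord1 !mxE.
have [->|[->|->]] := ord3 k; rewrite ?eqxx ?neqs /=; ring.
Qed.

Lemma vex_rod (w : 'cV[R]_3) th : vex (rodrigues w th - 1%:M) = (2 * sin th) *: w.
Proof.
have -> : rodrigues w th - 1%:M = sin th *: Defs.skew w + (1 - cos th) *: (Defs.skew w *m Defs.skew w).
  by apply/eqP; rewrite /rodrigues subr_eq -addrA addrC.
set S := Defs.skew w.
have hS : (S *m S)^T = S *m S by rewrite trmx_mul /S skew_tr mulmxN mulNmx opprK.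
rewrite vex_lin (@vex_sym ((1 - cos th) *: (S *m S))); last first.
  have -> : ((1 - cos th) *: (S *m S))^T = (1 - cos th) *: (S *m S)^T.
    by apply/matrixP => i j; rewrite !mxE.
  by rewrite hS.
by rewrite addr0 vex_skew scalerA mulrC.
Qed.

Lemma vtv_gt0 n (v : 'cV[R]_n) : v != 0 -> 0 < (v^T *m v) 0 0.
Proof.
move=> /mx_neq0 [i [j nz]]; rewrite [j]ord1 in nz.
rewrite mxE (bigD1 i) //= mxE.
apply: ltr_wpDr; first by apply: sumr_ge0 => l _; rewrite mxE -expr2 sqr_ge0.
by rewrite -expr2 lt_def sqrf_eq0 nz sqr_ge0.
Qed.

Lemma Ptheta_inj (v : 'cV[R]_3) : v != 0 -> (Ptheta R)^T *m v != 0.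
Proof.
move=> nz; apply/eqP => h.
have : v^T *m (Ptheta R *m vec (Defs.skew v)) = 0.
  by rewrite mulmxA -[v^T *m _]trmxK trmx_mul trmxK h trmx0 mul0mx.
rewrite Ptheta_mul vecK vex_skew -scalemxAr => /matrixP /(_ 0 0).
rewrite mxE [X in _ = X]mxE => /eqP; rewrite mulf_eq0 pnatr_eq0 /=.
by rewrite (gt_eqF (vtv_gt0 nz)).
Qed.

Lemma Pr_inj (v : 'cV[R]_(3*3)) : v != 0 -> (Pr R)^T *m v != 0.
Proof.
move=> nz; rewrite /Pr tr_row_mx trmx1 trmx0 mul_col_mx mul1mx mul0mx.
apply: contraNneq nz => h; by rewrite -(col_mxKu v (0 : 'cV[R]_3)) h linear0.
Qed.

End Lin.

Unset Implicit Arguments.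

Theorem proposition6 (R : realType) (H : 'M[R]_(3 * 3 + 3))
  (Rb : 'M[R]_3) (tb : 'cV[R]_3) (Rm : 'M[R]_3) (t : 'cV[R]_3)
  (w : 'cV[R]_3) (th : R) :
  posdef H -> is_SO3 Rb -> is_SO3 Rm ->
  qform H (col_mx (vec (Rm - Rb)) (t - tb)) <= 1 ->
  norm2 w = 1 -> Rm = rodrigues w th *m Rb ->
  0 <= th -> th <= pi / 2 ->
  qform (Htheta H Rb) (sin th *: w) <= 1 /\
  sin th = norm2 (sin th *: w) /\
  (0 < th -> w = (norm2 (sin th *: w))^-1 *: (sin th *: w)).
Proof.
move=> pH [RbO Rbd] _ hq nw hRm th0 thpi.
have pi2 : th < pi by apply: (le_lt_trans thpi); rewrite ltr_pdivrMr // ltr_pMr ?pi_gt0 // ltr1n.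
have s0 : 0 <= sin th by apply: sin_ge0_pi; rewrite th0 ltW.
have N2 : sin th = norm2 (sin th *: w).
  have S1 : \sum_i w i 0 ^+ 2 = 1.
    have : Num.sqrt (\sum_i w i 0 ^+ 2) ^+ 2 = 1 by move: nw; rewrite /norm2 => ->; rewrite expr1n.
    by rewrite sqr_sqrtr // sumr_ge0 // => i _; rewrite sqr_ge0.
  rewrite /norm2; under eq_bigr do rewrite mxE exprMn.
  by rewrite -mulr_sumr S1 mulr1 sqrtr_sqr ger0_norm.
split; last first.
  split => // thp; rewrite -N2 scalerA mulVf ?scale1r //.
  by apply/lt0r_neq0/sin_gt0_pi; rewrite thp.
have h1 := schur (col_mx (vec (Rm - Rb)) (t - tb)) pH (@Pr_inj R).
have PrE : Pr R *m col_mx (vec (Rm - Rb)) (t - tb) = vec (Rm - Rb).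
  by rewrite /Pr mul_row_col mul1mx mul0mx addr0.
rewrite PrE -/(Hr H) in h1.
have pHr : posdef (Hr H) := posdef_inv (posdef_cong (posdef_inv pH) (@Pr_inj R)).
set K := Rb^T *t (1%:M : 'M[R]_3).
have eK : vec (Rm - Rb) = K *m vec (rodrigues w th - 1%:M).
  by rewrite vec_mulr mulmxBl mul1mx -hRm.
have uK : K \in unitmx.
  apply: tensmx_unit => //; last exact: unitmx1.
  by rewrite unitmx_tr unitmxE Rbd unitr1.
have hK : forall v : 'cV[R]_(3*3), v != 0 -> K^T^T *m v != 0.
  move=> v nz; rewrite trmxK; apply: contraNneq nz => h.
  by rewrite -(mul1mx v) -(mulVmx uK) -mulmxA h mulmx0.
have pG2 := posdef_cong pHr hK; rewrite trmxK in pG2.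
have h2 := schur (vec (rodrigues w th - 1%:M)) pG2 (@Ptheta_inj R).
have := qform_congr (Hr H) K^T (vec (rodrigues w th - 1%:M)).
rewrite trmxK => e2; rewrite e2 -eK in h2.
rewrite Ptheta_mul vecK vex_rod in h2.
rewrite /Htheta /= -/K.
move: h2; set M := invmx _ => h2.
suff -> : qform (4 *: M) (sin th *: w) = qform M ((2 * sin th) *: w) by apply: le_trans h2 (le_trans h1 hq).
rewrite /qform.
have tz : forall c (x : 'cV[R]_3), (c *: x)^T = c *: x^T by move=> c x; apply/matrixP => i j; rewrite !mxE.
rewrite !tz -!scalemxAl -!scalemxAr -!scalemxAl !mxE.
ring.
Qed.
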